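(* Let $O_{(4,1)}(x,y,z,w)=x^4z^2w^2+y^4x^2w^2+z^4x^2y^2+w^4y^2z^2-4x^2y^2z^2w^2$, let $0\le a\le1$ and $\alpha,\beta\in\mathbb R$. If $F_1=a\,O_{(4,1)}+xyzw(\alpha x^2z^2+\beta y^2w^2)$ is positive semidefinite on $\mathbb R^4$, then $\alpha=\beta=0$. *)

(* Defs.v *)
From Stdlib Require Import Reals.
Open Scope R_scope.

Definition O41 (x y z w : R) : R :=
  x^4 * z^2 * w^2 + y^4 * x^2 * w^2 + z^4 * x^2 * y^2 + w^4 * y^2 * z^2
  - 4 * x^2 * y^2 * z^2 * w^2.

Definition F1 (a alpha beta x y z w : R) : R :=
  a * O41 x y z w + x * y * z * w * (alpha * x^2 * z^2 + beta * y^2 * w^2).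

(* Main.v *)
Require Import Defs.
From Stdlib Require Import Reals Lra Psatz.
Open Scope R_scope.

Lemma aux (a c : R) : 0 <= a <= 1 -> 0 < c ->
  let x := 4 / (4 + c) in a * (x^2-1)^2 + c * x * (x^2 - 1) < 0.
Proof.
  intros [Ha0 Ha1] Hc x.
  assert (Hx : x * (4 + c) = 4) by (unfold x; field; lra).
  assert (Hx0 : 0 < x) by (unfold x; apply Rdiv_lt_0_compat; lra).
  assert (Hx1 : x < 1) by (assert (0 < x * c) by (apply Rmult_lt_0_compat; lra); lra).
  assert (Hu : x^2 - 1 < 0) by nra.
  assert (Hv : x^2 + c * x - 1 > 0) by nra.
  assert (a * (x^2-1)^2 <= (x^2-1)^2) by (assert (0 <= (1-a)*(x^2-1)^2) by (apply Rmult_le_pos; [lra| apply pow2_ge_0]); lra).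
  assert (K : (x^2-1)*(x^2+c*x-1) < 0) by nra.
  assert (E : (x^2-1)*(x^2+c*x-1) = (x^2-1)^2 + c*x*(x^2-1)) by ring. lra.
Qed.

Theorem lemma4 (a alpha beta : R) :
  0 <= a <= 1 ->
  (forall x y z w : R, 0 <= F1 a alpha beta x y z w) ->
  alpha = 0 /\ beta = 0.
Proof.
  intros Ha H.
  assert (H1 := H 1 1 1 1). assert (H2 := H 1 1 1 (-1)).
  unfold F1, O41 in H1, H2. ring_simplify in H1. ring_simplify in H2.
  assert (Hb : beta = - alpha) by lra. subst beta.
  destruct (Rtotal_order alpha 0) as [Hn|[Hz|Hp]].
  - exfalso. pose proof (aux a (-alpha) Ha ltac:(lra)) as A. simpl in A.
    set (x := 4 / (4 + - alpha)) in A.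
    assert (B := H x 1 1 (-1)). unfold F1, O41 in B. nra.
  - subst; lra.
  - exfalso. pose proof (aux a alpha Ha Hp) as A. simpl in A.
    set (x := 4 / (4 + alpha)) in A.
    assert (B := H x 1 1 1). unfold F1, O41 in B. nra.
Qed.
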